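(* Let $F=(n_F)_{n\ge1}$ be a sequence in the family $\mathcal{T}_\lambda$. Let $n\in\mathbb{N}$, and let $(b_1,\dots,b_k)$ be any composition of $n$ into positive parts. Then the $F$-box $V_{n,n}=[1_F]\times[2_F]\times\cdots\times[n_F]$ can be partitioned into pairwise disjoint multi-blocks, each of the form $\sigma P_{b_1,\dots,b_k}$ for some permutation $\sigma$ (which may depend on the block).
   Context: Throughout, $\mathbb{N}=\{1,2,\dots\}$ and $[s_F]=\{1,\dots,s_F\}$. The family $\mathcal{T}_\lambda$ consists of sequences $F=(n_F)_{n\ge1}$ of natural numbers for which there exist functions $\lambda_K,\lambda_M:\mathbb{N}\times\mathbb{N}\to\mathbb{N}\cup\{0\}$ such that $(k+m)_F=\lambda_K(k,m)\,k_F+\lambda_M(k,m)\,m_F$ for all $k,m\in\mathbb{N}$. Multi-block: given a composition $(b_1,\dots,b_k)$ of $n$ (so $b_i\ge1$ and $b_1+\dots+b_k=n$), let $L^0=(1,2,\dots,b_1,1,2,\dots,b_2,\dots,1,2,\dots,b_k)$, a vector of length $n$. For a permutation $\sigma$ of $\{1,\dots,n\}$, let $L_s=L^0_{\sigma(s)}$. A multi-block of the form $\sigma P_{b_1,\dots,b_k}$ is a set $A_1\times\cdots\times A_n$ with $A_s\subseteq[s_F]$ and $|A_s|=(L_s)_F$ for $s=1,\dots,n$. In cobweb language, this is a sub-layer of $\langle\Phi_1\to\Phi_n\rangle$, and its points correspond to maximal paths. *)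

(* Defs.v *)
From mathcomp Require Import all_boot all_order all_fingroup.
Set Implicit Arguments. Unset Strict Implicit. Unset Printing Implicit Defensive.

(* F : nat -> nat is the sequence (n_F)_{n>=1}; the value F 0 is irrelevant. *)

Definition in_TLambda (F : nat -> nat) : Prop :=
  exists lK lM : nat -> nat -> nat,
    forall k m, 0 < k -> 0 < m -> F (k + m) = lK k m * F k + lM k m * F m.

Definition is_composition (n : nat) (b : seq nat) : bool :=
  all (fun x => 0 < x) b && (sumn b == n).

(* L^0 = (1,..,b_1, 1,..,b_2, ..., 1,..,b_k), a list (0-indexed). *)
Definition L0 (b : seq nat) : seq nat := flatten [seq iota 1 bi | bi <- b].

(* Coordinates are indexed by s : 'I_n, standing for s+1 in {1,..,n}.
   A point of the F-box is p : 'I_n -> nat. *)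
Definition in_box (F : nat -> nat) (n : nat) (p : 'I_n -> nat) : Prop :=
  forall s : 'I_n, 0 < p s <= F s.+1.

(* A candidate multi-block: a permutation sigma and the sets A_s (as lists). *)
Record multiblock (n : nat) := MultiBlock {
  mb_perm : 'S_n;
  mb_sets : 'I_n -> seq nat }.

(* B is a multi-block of the form sigma P_{b_1..b_k}, sigma = mb_perm B:
   A_s is a subset of [ (s+1)_F ] of cardinality (L_s)_F, L_s = L^0_{sigma(s)}. *)
Definition is_multiblock (F : nat -> nat) (n : nat) (b : seq nat)
    (B : multiblock n) : Prop :=
  forall s : 'I_n,
    [/\ uniq (mb_sets B s),
        all (fun x => 0 < x <= F s.+1) (mb_sets B s) &
        size (mb_sets B s) = F (nth 0 (L0 b) (mb_perm B s))].

Definition in_block (n : nat) (B : multiblock n) (p : 'I_n -> nat) : Prop :=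
  forall s : 'I_n, p s \in mb_sets B s.

(* Main.v *)
Require Import Defs.
From Stdlib Require List.
From mathcomp Require Import all_boot all_order all_fingroup.
Set Implicit Arguments. Unset Strict Implicit. Unset Printing Implicit Defensive.

Section Parts.
Variable F : nat -> nat.

Definition blockT := ((nat -> seq nat) * (nat -> nat))%type.

Definition inb (n : nat) (B : nat -> seq nat) (q : nat -> nat) : bool :=
  all (fun i => q i \in B i) (iota 0 n).

Definition Part (n : nat) (v : nat -> nat) (M : seq nat) : Prop :=
  forall S : nat -> seq nat,
    (forall i, i < n -> uniq (S i) /\ size (S i) = F (v i)) ->
    exists bl : seq blockT,
      (forall blk, List.In blk bl -> forall i, i < n ->
          [/\ uniq (blk.1 i), {subset blk.1 i <= S i} & size (blk.1 i) = F (blk.2 i)]) /\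
      (forall blk, List.In blk bl -> perm_eq (map blk.2 (iota 0 n)) M) /\
      (forall q, count (fun blk : blockT => inb n blk.1 q) bl = inb n S q).

Lemma Part_refl n v : Part n v (map v (iota 0 n)).
Proof.
move=> S HS; exists [:: (S, v)]; split; [|split].
- by move=> blk [<-|[]] i /HS [u s] /=; split.
- by move=> blk [<-|[]].
- by move=> q /=; rewrite addn0.
Qed.

Lemma Part_ext n v v' M : (forall i, i < n -> v i = v' i) -> Part n v M -> Part n v' M.
Proof.
move=> E P S HS; apply: P => i lti; rewrite E //; exact: HS.
Qed.

Lemma Part_permM n v M M' : perm_eq M M' -> Part n v M -> Part n v M'.
Proof.
move=> pM P S HS; have [bl [H1 [H2 H3]]] := P S HS; exists bl; split => //; split => //.
by move=> blk /H2 /perm_trans; apply.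
Qed.

Lemma Part_trans n v M1 M2 : Part n v M1 ->
  (forall u, perm_eq (map u (iota 0 n)) M1 -> Part n u M2) -> Part n v M2.
Proof.
move=> P1 P2 S HS; have [bl [H1 [H2 H3]]] := P1 S HS.
suff [bl' [K1 [K2 K3]]] : exists bl' : seq blockT,
      (forall blk, List.In blk bl' -> forall i, i < n ->
          [/\ uniq (blk.1 i), {subset blk.1 i <= S i} & size (blk.1 i) = F (blk.2 i)]) /\
      (forall blk, List.In blk bl' -> perm_eq (map blk.2 (iota 0 n)) M2) /\
      (forall q, count (fun blk : blockT => inb n blk.1 q) bl' =
                 count (fun blk : blockT => inb n blk.1 q) bl).
  by exists bl'; split => //; split => // q; rewrite K3 H3.
elim: bl H1 H2 {H3} => [|blk bl IH] H1 H2; first by exists [::].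
have [bl' [K1 [K2 K3]]] : exists bl' : seq blockT,
      (forall blk, List.In blk bl' -> forall i, i < n ->
          [/\ uniq (blk.1 i), {subset blk.1 i <= S i} & size (blk.1 i) = F (blk.2 i)]) /\
      (forall blk, List.In blk bl' -> perm_eq (map blk.2 (iota 0 n)) M2) /\
      (forall q, count (fun blk : blockT => inb n blk.1 q) bl' =
                 count (fun blk : blockT => inb n blk.1 q) bl).
  by apply: IH => [b bin|b bin]; [apply: H1|apply: H2]; right.
have hb : List.In blk (blk :: bl) by left.
have [c [L1 [L2 L3]]] := P2 blk.2 (H2 _ hb) blk.1 (fun i lti => let: And3 a _ c := H1 _ hb i lti in conj a c).
exists (c ++ bl'); split; [|split].
- move=> b /List.in_app_iff [bin|bin] i lti; last exact: K1.
  have [u s e] := L1 _ bin i lti; split => // x /s; have [_ s2 _] := H1 _ hb i lti; exact: s2.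
- by move=> b /List.in_app_iff [] bin; [apply: L2|apply: K2].
- by move=> q; rewrite count_cat L3 K3.
Qed.


Lemma all_perm_fun n (r : nat -> nat) (P : pred nat) :
  perm_eq (map r (iota 0 n)) (iota 0 n) ->
  all P (iota 0 n) = all (fun i => P (r i)) (iota 0 n).
Proof.
move=> pr; rewrite -(perm_all _ pr) all_map; exact: eq_all.
Qed.

Lemma Part_perm n v u M : Part n v M ->
  perm_eq (map u (iota 0 n)) (map v (iota 0 n)) -> Part n u M.
Proof.
move=> P; rewrite perm_sym => /(perm_iotaP 0) [Is pIs Ev].
rewrite size_map size_iota in pIs.
have sIs : size Is = n by rewrite (perm_size pIs) size_iota.
have uIs : uniq Is by rewrite (perm_uniq pIs) iota_uniq.
pose pi i := nth 0 Is i; pose rho j := index j Is.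
have f3 i : i < n -> pi i < n.
  by move=> lt; rewrite -[_ < n](mem_iota 0) -(perm_mem pIs) mem_nth // sIs.
have f1 i : i < n -> v i = u (pi i).
  move=> lt; have := congr1 (fun s => nth 0 s i) Ev => /=.
  rewrite (nth_map 0) ?size_iota // nth_iota // (nth_map 0) ?sIs //.
  by rewrite (nth_map 0) ?size_iota ?f3 // nth_iota ?f3.
have f2 j : j < n -> pi (rho j) = j.
  by move=> lt; rewrite /pi /rho nth_index // (perm_mem pIs) mem_iota.
have f5 j : j < n -> rho j < n by move=> lt; rewrite /rho -sIs index_mem (perm_mem pIs) mem_iota.
have f4 : perm_eq (map rho (iota 0 n)) (iota 0 n).
  have e : iota 0 n = map rho Is.
    rewrite -{1}(mkseq_nth 0 Is) /mkseq -map_comp sIs.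
    rewrite -[LHS]map_id; apply/eq_in_map => i; rewrite mem_iota /= => lt.
    by rewrite /rho index_uniq ?sIs.
  rewrite {2}e; apply: perm_map; by rewrite perm_sym.
have fpi : perm_eq (map pi (iota 0 n)) (iota 0 n).
  by rewrite -sIs -/(mkseq _ _) mkseq_nth sIs.
move=> S HS.
have HS' : forall i, i < n -> uniq (S (pi i)) /\ size (S (pi i)) = F (v i).
  by move=> i lt; rewrite f1 //; apply: HS; apply: f3.
have [bl [H1 [H2 H3]]] := P _ HS'.
exists (map (fun blk : blockT => ((fun j => blk.1 (rho j)), (fun j => blk.2 (rho j)))) bl).
split; [|split].
- move=> b /List.in_map_iff [blk [<- bin]] j lt /=.
  have [a s c] := H1 _ bin _ (f5 _ lt); split => // x /s; by rewrite f2.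
- move=> b /List.in_map_iff [blk [<- bin]] /=.
  rewrite (map_comp blk.2 rho); apply: perm_trans (H2 _ bin); exact: perm_map.
- move=> q; rewrite count_map.
  have -> : inb n S q = inb n (fun i => S (pi i)) (fun i => q (pi i)).
    by rewrite /inb (all_perm_fun _ fpi).
  rewrite -H3; apply: eq_count => blk /=.
  rewrite /inb [in RHS](all_perm_fun _ f4); apply: eq_in_all => j; rewrite mem_iota /= => lt.
  by rewrite f2.
Qed.


Lemma inbS n B q : inb n.+1 B q = inb n B q && (q n \in B n).
Proof. by rewrite /inb -addn1 iotaD all_cat /= andbT. Qed.

Lemma inb_ext n B C q : inb n (fun i => if i == n then C else B i) q = inb n B q.
Proof.
by apply: eq_in_all => i; rewrite mem_iota /= => lt; rewrite ltn_eqF.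
Qed.

Lemma map_ext_iota n (u : nat -> nat) y :
  map (fun i => if i == n then y else u i) (iota 0 n.+1) = map u (iota 0 n) ++ [:: y].
Proof.
rewrite -addn1 iotaD map_cat /= eqxx; congr (_ ++ _).
by apply/eq_in_map => i; rewrite mem_iota /= => lt; rewrite ltn_eqF.
Qed.

Lemma Part_add n v x ys M :
  sumn (map F ys) = F x ->
  (forall y, y \in ys -> exists My, Part n v My /\ perm_eq (My ++ [:: y]) M) ->
  forall v', (forall i, i < n -> v' i = v i) -> v' n = x -> Part n.+1 v' M.
Proof.
move=> Hsum Hys v' Ev' Evn S HS.
have HSn : forall i, i < n -> uniq (S i) /\ size (S i) = F (v i).
  by move=> i lt; rewrite -Ev' //; apply: HS; apply: ltnW.
suff: forall ys s, size s = sumn (map F ys) -> uniq s ->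
  (forall y, y \in ys -> exists My, Part n v My /\ perm_eq (My ++ [:: y]) M) ->
  exists bl : seq blockT,
      (forall blk, List.In blk bl -> forall i, i < n.+1 ->
          [/\ uniq (blk.1 i), {subset blk.1 i <= if i == n then s else S i}
            & size (blk.1 i) = F (blk.2 i)]) /\
      (forall blk, List.In blk bl -> perm_eq (map blk.2 (iota 0 n.+1)) M) /\
      (forall q, count (fun blk : blockT => inb n.+1 blk.1 q) bl = inb n S q && (q n \in s)).
  have [un sz] := HS n (ltnSn n).
  move=> /(_ ys (S n)); rewrite sz Evn Hsum => /(_ erefl un Hys) [bl [H1 [H2 H3]]].
  exists bl; split; [|split] => //.
  - move=> blk bin i lt; have [a b c] := H1 _ bin i lt; split => //.
    by case: eqP b => // ->.
  - by move=> q; rewrite H3 inbS.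
elim=> [|y ys' IH] s /= Hs us Hy.
  exists [::]; split; [by []|split; [by []|]].
  by move=> q; move/size0nil: Hs => ->; rewrite andbF.
have Fy : F y <= size s by rewrite Hs leq_addr.
have [My [PMy pMy]] := Hy y (mem_head _ _).
have [bl1 [H1 [H2 H3]]] := PMy S HSn.
have [bl2 [K1 [K2 K3]]] : exists bl : seq blockT,
      (forall blk, List.In blk bl -> forall i, i < n.+1 ->
          [/\ uniq (blk.1 i), {subset blk.1 i <= if i == n then drop (F y) s else S i}
            & size (blk.1 i) = F (blk.2 i)]) /\
      (forall blk, List.In blk bl -> perm_eq (map blk.2 (iota 0 n.+1)) M) /\
      (forall q, count (fun blk : blockT => inb n.+1 blk.1 q) bl =
                 inb n S q && (q n \in drop (F y) s)).
  apply: IH.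
  - by rewrite size_drop Hs addKn.
  - exact: drop_uniq.
  - by move=> z zin; apply: Hy; rewrite inE zin orbT.
pose C := take (F y) s.
exists (map (fun blk : blockT => ((fun i => if i == n then C else blk.1 i),
                                (fun i => if i == n then y else blk.2 i))) bl1 ++ bl2).
split; [|split].
- move=> b /List.in_app_iff [/List.in_map_iff [blk [<- bin]]|bin] i lt /=.
  + case: eqP => [_|ne].
    * split; [exact: take_uniq|exact: mem_take|by rewrite size_takel].
    * have lt' : i < n by rewrite ltn_neqAle (introN eqP ne) -ltnS.
      by have [a b' c] := H1 _ bin i lt'.
  + have [a b' c] := K1 _ bin i lt; split => //.
    by case: eqP b' => // _ b' z /b'; apply: mem_drop.
- move=> b /List.in_app_iff [/List.in_map_iff [blk [<- bin]]|bin]; last exact: K2.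
  apply: (@perm_trans _ (map blk.2 (iota 0 n) ++ [:: y])).
    by rewrite -map_ext_iota; exact: perm_refl.
  apply: perm_trans pMy; rewrite perm_cat2r; exact: H2.
- move=> q; rewrite count_cat count_map K3.
  have -> : count (fun blk : blockT => inb n.+1 (fun i => if i == n then C else blk.1 i) q) bl1
            = inb n S q && (q n \in C).
    case hC: (q n \in C).
    + rewrite andbT -H3; apply: eq_count => blk /=; by rewrite inbS inb_ext eqxx hC andbT.
    + rewrite andbF /=; rewrite -(count_pred0 bl1); apply: eq_count => blk /=.
      by rewrite inbS eqxx hC andbF.
  have : uniq (C ++ drop (F y) s) by rewrite cat_take_drop.
  rewrite cat_uniq => /and3P [_ dis _].
  rewrite -{2}(cat_take_drop (F y) s) mem_cat -/C.
  case hC: (q n \in C); case hD: (q n \in drop (F y) s); rewrite ?andbF ?andbT ?addn0 //.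
  by move: dis => /hasPn /(_ _ hD); rewrite hC.
Qed.


Lemma iota1 n : map (fun i => i.+1) (iota 0 n) = iota 1 n.
Proof. by rewrite -[1]/(1 + 0) iotaDl; apply: eq_map => i; rewrite add1n. Qed.

Lemma iotaSr m a : iota m a.+1 = iota m a ++ [:: m + a].
Proof. by rewrite -addn1 iotaD. Qed.

Lemma two_part (HF : in_TLambda F) :
  forall n a c, a + c = n -> Part n (fun i => i.+1) (iota 1 a ++ iota 1 c).
Proof.
have [lK [lM HL]] := HF.
elim=> [|n IH] a c.
  move/eqP; rewrite addn_eq0 => /andP [/eqP-> /eqP->].
  by apply: (Part_permM _ (@Part_refl 0 (fun i => i.+1))).
case: a => [|a'].
  rewrite add0n => ->; apply: (Part_permM _ (@Part_refl _ _)); by rewrite iota1.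
case: c => [|c'].
  rewrite addn0 => ->; apply: (Part_permM _ (@Part_refl _ _)); by rewrite iota1 cats0.
move=> E.
pose a := a'.+1; pose c := c'.+1.
apply: (@Part_add n (fun i => i.+1) n.+1 (nseq (lK a c) a ++ nseq (lM a c) c)) => //.
- rewrite -E HL // map_cat !map_nseq sumn_cat !sumn_nseq; congr (_ + _); exact: mulnC.
- move=> y; rewrite mem_cat !mem_nseq => /orP [/andP [_ /eqP->]|/andP [_ /eqP->]].
  + exists (iota 1 a' ++ iota 1 c); split.
    * apply: IH; move: E; rewrite addSn; by case.
    * rewrite /a iotaSr -!catA perm_cat2l add1n.
      by rewrite perm_catC.
  + exists (iota 1 a ++ iota 1 c'); split.
    * apply: IH; move: E; rewrite addnS; by case.
    * rewrite (iotaSr 1 c') add1n -catA; exact: perm_refl.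
Qed.

Lemma Part_extend a v M : Part a v M -> forall c,
  Part (a + c) (fun i => if i < a then v i else (i - a).+1) (M ++ iota 1 c).
Proof.
move=> P; elim=> [|c IH].
  rewrite addn0 cats0; apply: Part_ext P => i ->; by [].
rewrite addnS.
apply: (@Part_add (a + c) (fun i => if i < a then v i else (i - a).+1) c.+1 [:: c.+1]) => //.
- by rewrite /= addn0.
- move=> y; rewrite inE => /eqP ->; exists (M ++ iota 1 c); split => //.
  by rewrite -catA -[c.+1]add1n -iotaSr.
- by rewrite ltnNge leq_addr /= addKn.
Qed.

Lemma comp_part (HF : in_TLambda F) : forall b, Part (sumn b) (fun i => i.+1) (L0 b).
Proof.
elim/last_ind=> [|b' c IH]; first by apply: (Part_permM _ (@Part_refl 0 (fun i => i.+1))).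
rewrite sumn_rcons /L0 map_rcons flatten_rcons -/(L0 b').
apply: Part_trans (two_part HF erefl) _ => u pu.
refine (Part_perm (@Part_extend _ _ _ IH c) _).
apply: (perm_trans pu).
rewrite [X in perm_eq _ X](_ : _ = iota 1 (sumn b') ++ iota 1 c); first exact: perm_refl.
rewrite iotaD map_cat add0n; congr (_ ++ _).
- rewrite -iota1; apply/eq_in_map => i; rewrite mem_iota /= => ->; by [].
- have -> : iota (sumn b') c = map (addn (sumn b')) (iota 0 c) by rewrite -iotaDl addn0.
  rewrite -iota1 -map_comp; apply/eq_in_map => i _ /=.
  by rewrite ltnNge leq_addr /= addKn.
Qed.

End Parts.

Lemma In_nth (T : Type) (d : T) (s : seq T) i : i < size s -> List.In (nth d s i) s.
Proof.
elim: s i => [|x s IH] [|i] //= lt; first by left.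
by right; apply: IH.
Qed.

Lemma count_two (T : Type) (P : pred T) (s : seq T) d i j :
  i < size s -> j < size s -> i != j -> P (nth d s i) -> P (nth d s j) -> 1 < count P s.
Proof.
have pos k : k < size s -> P (nth d s k) -> 0 < count P s.
  by move=> lt Pk; rewrite -has_count; apply/(has_nthP d); exists k.
elim: s i j {pos} => [|x s IH] [|i] [|j] //= lti ltj ne Pi Pj.
- have : 0 < count P s by rewrite -has_count; apply/(has_nthP d); exists j.
  by rewrite Pi; case: (count P s).
- have : 0 < count P s by rewrite -has_count; apply/(has_nthP d); exists i.
  by rewrite Pj; case: (count P s).
- have := IH i j lti ltj ne Pi Pj; case: (P x) => /=; [by move/ltnW; rewrite add1n|by []].
Qed.

Lemma inb_ord n (B : nat -> seq nat) (q : nat -> nat) :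
  inb n B q = [forall s : 'I_n, q s \in B s].
Proof.
apply/allP/forallP => [H s|H k]; first by apply: H; rewrite mem_iota /=.
by rewrite mem_iota /= => lt; exact: (H (Ordinal lt)).
Qed.

Theorem theorem2 (F : nat -> nat) (HFpos : forall m, 0 < m -> 0 < F m)
  (HF : in_TLambda F) (n : nat) (Hn : 0 < n) (b : seq nat)
  (Hb : is_composition n b) :
  exists (m : nat) (Bs : 'I_m -> multiblock n),
    (forall i, @is_multiblock F n b (Bs i)) /\
    (forall i j, i != j -> forall p, ~ (in_block (Bs i) p /\ in_block (Bs j) p)) /\
    (forall p, @in_box F n p -> exists i, in_block (Bs i) p).
Proof.
have sb : sumn b = n by move: Hb => /andP [_ /eqP].
have P := @comp_part F HF b; rewrite sb in P.
pose S := fun i => iota 1 (F i.+1).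
have [bl [H1 [H2 H3]]] := P S (fun i _ => conj (iota_uniq _ _) (size_iota _ _)).
pose sig_of (u : nat -> nat) : 'S_n :=
  odflt 1%g [pick σ : 'S_n | [forall s : 'I_n, u s == nth 0 (L0 b) (σ s)]].
have sigP u : perm_eq (map u (iota 0 n)) (L0 b) ->
    forall s : 'I_n, u s = nth 0 (L0 b) (sig_of u s).
  move=> pu; rewrite /sig_of; case: pickP => [σ /forallP H s|Hnone]; first exact/eqP.
  have tP : size (L0 b) == n by rewrite -(perm_size pu) size_map size_iota.
  have : perm_eq (map u (iota 0 n)) (Tuple tP) by [].
  move/tuple_permP => [σ Eσ]; move: (Hnone σ); move/negbT/forallPn => [s].
  have := congr1 (fun t => nth 0 t s) Eσ => /=.
  rewrite (nth_map 0) ?size_iota // nth_iota // add0n => ->.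
  by rewrite nth_mktuple (tnth_nth 0) eqxx.
pose dflt : blockT := (fun _ => [::], fun _ => 0).
exists (size bl).
exists (fun i : 'I_(size bl) =>
   MultiBlock (sig_of (nth dflt bl i).2) (fun s : 'I_n => (nth dflt bl i).1 s)).
pose o : 'I_n := Ordinal Hn.
pose q (p : 'I_n -> nat) (k : nat) := p (insubd o k).
have inbq p B : inb n B (q p) = [forall s : 'I_n, p s \in B s].
  rewrite inb_ord; apply: eq_forallb => s; by rewrite /q valKd.
split; [|split].
- move=> i s /=; have bin := In_nth dflt (ltn_ord i).
  have [u sub sz] := H1 _ bin s (ltn_ord s); split => //.
  + apply/allP => x /sub; rewrite /S mem_iota; case: x => //= x; by rewrite add1n ltnS.
  + by rewrite sz -sigP //; apply: H2.
- move=> i j ne p [Ii Ij].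
  have : 1 < count (fun blk : blockT => inb n blk.1 (q p)) bl.
    apply: (count_two (d := dflt) (ltn_ord i) (ltn_ord j) ne).
    + by rewrite /= inbq; apply/forallP => s; exact: Ii.
    + by rewrite /= inbq; apply/forallP => s; exact: Ij.
  by rewrite H3; case: (inb _ _ _).
- move=> p Hp.
  have : 0 < count (fun blk : blockT => inb n blk.1 (q p)) bl.
    rewrite H3 inbq lt0b; apply/forallP => s; rewrite mem_iota; case/andP: (Hp s).
    by case: (p s) => //= x _; rewrite add1n ltnS.
  rewrite -has_count => /(has_nthP dflt) [i lt /=]; rewrite inbq => /forallP H.
  by exists (Ordinal lt) => s; exact: H.
Qed.
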